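(* Let $f$ be a frog model statistic with values in $[0,\infty]$. Suppose that for some nonroot vertex $v$ and all frog models $(\eta,S)$, $$f(\eta,S)=\sum_{i=1}^{\eta(v)}f\bigl(\sigma_{S_\cdot(v,i)}(\kappa_v(\eta,S))\bigr).$$ Then for all $(\eta,S)$ and all paths $P^1_\cdot,\dots,P^m_\cdot$ starting at $v$: (i) for every $m\geq1$, $(-1)^m\Delta_{P^1_\cdot}\cdots\Delta_{P^m_\cdot}f(\eta,S)\le0$ whenever all values $f(\sigma_{P^{u_1}_\cdot}\cdots\sigma_{P^{u_j}_\cdot}(\eta,S))$, $\{u_1,\dots,u_j\}\subseteq\{1,\dots,m\}$, are finite; (ii) if $f(\eta,S)=\infty$ then $f(\sigma_{P^1_\cdot}(\eta,S))=\infty$; (iii) if $f(\sigma_{P^1_\cdot}\sigma_{P^2_\cdot}(\eta,S))=\infty$ then $f(\sigma_{P^i_\cdot}(\eta,S))=\infty$ for $i=1$ or $i=2$.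
   Context: Frog model: $G$ countable with root $\emptyset$; $(\eta,S)$ consists of counts $\eta(v)\in\{0,1,\dots\}$ for $v\ne\emptyset$ and paths $S_\cdot(v,i)$ with $S_0(v,i)=v$; one active frog starts at $\emptyset$; sleeping frogs activate when an active frog visits their vertex, then follow their paths. $\kappa_v(\eta,S)$: delete all frogs at $v$. $\sigma_{P_\cdot}(\eta,S)$: add one extra frog with path $P_\cdot$ at $P_0$. $\Delta_{P_\cdot}f(\eta,S)=f(\sigma_{P_\cdot}(\eta,S))-f(\eta,S)$. *)

(* Defs.v *)
From Stdlib Require Import List.
From HB Require Import structures.
From mathcomp Require Import all_boot all_order all_algebra.
From mathcomp Require Import all_classical all_reals ereal.
Set Implicit Arguments. Unset Strict Implicit. Unset Printing Implicit Defensive.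
Import Order.TTheory GRing.Theory Num.Theory.

(* A path is a map nat -> V (S_0 is the starting vertex).
   A frog model (eta,S) is encoded as F : V -> seq (nat -> V):
   F v is the list [S(v,1); ...; S(v,eta(v))], so eta(v) = size (F v). *)

Definition fpath (V : Type) := nat -> V.
Definition fmodel (V : Type) := V -> seq (nat -> V).

Definition is_walk (V : Type) (E : V -> V -> Prop) (P : nat -> V) : Prop :=
  forall n, E (P n) (P n.+1).

Definition frog_model (V : Type) (E : V -> V -> Prop) (root : V)
  (F : fmodel V) : Prop :=
  F root = [::] /\
  (forall u P, In P (F u) -> P 0%N = u /\ is_walk E P).

Definition kappa (V : eqType) (v : V) (F : fmodel V) : fmodel V :=
  fun u => if u == v then [::] else F u.

Definition sigma (V : eqType) (P : nat -> V) (F : fmodel V) : fmodel V :=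
  fun u => if u == P 0%N then rcons (F u) P else F u.

Definition sigmas (V : eqType) (Ps : seq (nat -> V)) (F : fmodel V) : fmodel V :=
  foldr (@sigma V) F Ps.

Definition Delta (R : realType) (V : eqType) (P : nat -> V)
  (f : fmodel V -> \bar R) : fmodel V -> \bar R :=
  fun F => (f (sigma P F) - f F)%E.

Definition Deltas (R : realType) (V : eqType) (Ps : seq (nat -> V))
  (f : fmodel V -> \bar R) : fmodel V -> \bar R :=
  foldr (@Delta R V) f Ps.

(* membership of a path in a list of paths (paths have no decidable equality) *)
Definition path_in (V : Type) (P : nat -> V) (s : seq (nat -> V)) : Prop :=
  In P s.

(* Main.v *)
Require Import Defs.
From HB Require Import structures.
From mathcomp Require Import all_boot all_order all_algebra.
From mathcomp Require Import all_classical all_reals ereal.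
From mathcomp Require Import ring.
Import Order.TTheory GRing.Theory Num.Theory.
Local Open Scope ring_scope.
Local Open Scope ereal_scope.

Theorem lemma19 (R : realType) (V : countType) (E : V -> V -> Prop)
  (root v : V) (f : fmodel V -> \bar R) :
  v != root ->
  (forall F, frog_model E root F -> 0 <= f F) ->
  (forall F, frog_model E root F ->
     f F = \sum_(P <- F v) f (sigma P (kappa v F))) ->
  forall F, frog_model E root F ->
  (forall Ps : seq (nat -> V), (0 < size Ps)%N ->
     (forall P, path_in P Ps -> P 0%N = v /\ is_walk E P) ->
     (forall m : bitseq, f (sigmas (mask m Ps) F) \is a fin_num) ->
     ((-1) ^+ size Ps)%:E * Deltas Ps f F <= 0)
  /\
  (forall P : nat -> V, P 0%N = v -> is_walk E P ->
     f F = +oo -> f (sigma P F) = +oo)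
  /\
  (forall P1 P2 : nat -> V, P1 0%N = v -> is_walk E P1 ->
     P2 0%N = v -> is_walk E P2 ->
     f (sigma P1 (sigma P2 F)) = +oo ->
     f (sigma P1 F) = +oo \/ f (sigma P2 F) = +oo).
Proof.
move=> hvr hge0 hsum F hF.
pose valid := frog_model E root.
pose okP (P : nat -> V) := P 0%N = v /\ is_walk E P.
have vkap : forall G, valid G -> valid (kappa v G).
  move=> G [h1 h2]; split.
    by rewrite /kappa eq_sym (negbTE hvr).
  move=> u X; rewrite /kappa; case: (u == v) => //; exact: h2.
have vsig : forall P G, okP P -> valid G -> valid (sigma P G).
  move=> P G [hP0 hPw] [h1 h2]; split.
    by rewrite /sigma hP0 eq_sym (negbTE hvr).
  move=> u X; rewrite /sigma; case: eqP => [->|_]; last exact: h2.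
  rewrite -cats1 => /List.in_app_iff [/h2 //|[<-|[]]]; by [].
have ksig : forall P G, okP P -> kappa v (sigma P G) = kappa v G.
  move=> P G [hP0 _]; apply: funext => u; rewrite /kappa /sigma hP0.
  by case: eqP.
pose h G P := f (sigma P (kappa v G)).
have hpos : forall G P, okP P -> valid G -> 0 <= h G P.
  by move=> G P hP hG; apply: hge0; apply: vsig => //; apply: vkap.
have hA : forall G P, okP P -> valid G -> f (sigma P G) = f G + h G P.
  move=> G P hP hG.
  rewrite (hsum _ (vsig _ _ hP hG)) (hsum _ hG) ksig //.
  have -> : sigma P G v = rcons (G v) P.
    by rewrite /sigma; case: hP => -> _; rewrite eqxx.
  by rewrite big_rcons.
split.
  have key : forall Ps G, valid G -> (forall P, path_in P Ps -> okP P) ->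
     f G \is a fin_num -> (forall P, path_in P Ps -> h G P \is a fin_num) ->
     Deltas Ps f G = match Ps with [::] => f G | [:: P] => f (sigma P G) - f G
                      | _ => 0 end.
    elim=> [//|P Qs IH] G hG hPs hf0 hfin.
    have hP : okP P by apply: hPs; left.
    have hQs : forall Q, path_in Q Qs -> okP Q by move=> Q hQ; apply: hPs; right.
    have hfQs : forall Q, path_in Q Qs -> h G Q \is a fin_num.
      by move=> Q hQ; apply: hfin; right.
    have hfP : h G P \is a fin_num by apply: hfin; left.
    rewrite /Deltas /= -/(Deltas Qs f) /Delta.
    have e1 := IH (sigma P G) (vsig _ _ hP hG) hQs.
    have e2 := IH G hG hQs hf0 hfQs.
    rewrite e1 ?e2; first last.
    - by move=> Q hQ; rewrite /h ksig //; apply: hfQs.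
    - by rewrite hA // fin_numD hf0 hfP.
    clear e1 e2.
    case: Qs IH hPs hQs hfin hfQs => [//|Q [|Q' Qs']] IH hPs hQs hfin hfQs; last by rewrite sube0.
    have hQ : okP Q by apply: hQs; left.
    have hfQ : h G Q \is a fin_num by apply: hfQs; left.
    have eh : h (sigma P G) Q = h G Q by rewrite /h ksig.
    rewrite (hA _ Q hQ (vsig _ _ hP hG)) eh (hA _ P hP hG) (hA _ Q hQ hG).
    move: hf0 hfP hfQ.
    case: (f G) => [a| |] //; case: (h G P) => [b| |] //;
      case: (h G Q) => [c| |] // _ _ _.
    rewrite -!EFinD; apply: (congr1 (@EFin R)); ring.
  have maskP : forall P (Ps : seq (nat -> V)), path_in P Ps ->
      exists m : bitseq, mask m Ps = [:: P].
    move=> P; elim=> [[]|Q Qs IHs] [->|hin].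
    - by exists (true :: nseq (size Qs) false); rewrite /= mask_false.
    - by have [m hm] := IHs hin; exists (false :: m).
  move=> Ps hsz hPs hfin.
  have hf0 : f F \is a fin_num by have := hfin [::].
  rewrite (key Ps F hF hPs hf0); last first.
    move=> P hin; have [m hm] := maskP P Ps hin.
    have := hfin m; rewrite hm /= (hA _ P (hPs P hin) hF) fin_numD.
    by case/andP.
  case: Ps hsz hPs hfin => [//|P [|Q Qs]] _ hPs hfin; last by rewrite mule0.
  have hP : okP P by apply: hPs; left.
  have f0 := hfin [:: false].
  rewrite /= in f0.
  rewrite expr1 mulN1e oppe_le0 (hA _ P hP hF) (addeC (f F)) addeK //.
  exact: hpos.
split.
  move=> P hP0 hPw hinf.
  rewrite (hA _ P (conj hP0 hPw) hF) hinf.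
  have := hpos F P (conj hP0 hPw) hF.
  by case: (h F P).
move=> P1 P2 h10 h1w h20 h2w.
have hP1 : okP P1 by split.
have hP2 : okP P2 by split.
rewrite (hA _ P1 hP1 (vsig _ _ hP2 hF)) /h ksig // -/(h F P1).
rewrite (hA _ P1 hP1 hF) (hA _ P2 hP2 hF).
have := hpos F P1 hP1 hF; have := hpos F P2 hP2 hF; have := hge0 F hF.
case: (f F) => [a| |] //; case: (h F P2) => [b| |] //; case: (h F P1) => [c| |] //.
all: try by move=> *; left.
all: try by move=> *; right.
all: move=> _ _ _; rewrite -?EFinD //.
Qed.
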